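(* Let $(k_i)_{i\in\mathbb N}\subset\mathbb N$ satisfy $k_{2i}>1$ for infinitely many $i$ and $k_{2i-1}>1$ for infinitely many $i$. Then $\bigcap_{n\ge1} Q^+B_{k_n}B_{k_{n-1}}\cdots B_{k_1}$ is a single half-line; equivalently, for every nonzero $\vec a\in Q^+$ the limit $(u,v,w)=\lim_{n\to\infty}\frac{\vec aB_{k_n}\cdots B_{k_1}}{\|\vec aB_{k_n}\cdots B_{k_1}\|_1}$ exists and is independent of $\vec a$, i.e. the direction $(u,v,w)$ is uniquely determined by $(k_i)_{i\in\mathbb N}$.
   Context: Vectors are row vectors and matrices act by right multiplication. $Q^+=\{x\in\mathbb R^3:x_i\ge0\}$. For $k\in\mathbb N$, $B_k=\begin{pmatrix}0&1&k-1\\1&0&0\\0&1&k\end{pmatrix}$ (this equals $UA_k^{-1}U^{-1}$ with $A_k=\begin{pmatrix}0&k&k-1\\1&0&0\\0&1&1\end{pmatrix}$ and $U=\begin{pmatrix}0&1&0\\1&0&0\\0&0&-1\end{pmatrix}$); each $B_k$ maps $Q^+$ into itself. *)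

(* Defs.v *)
From HB Require Import structures.
From mathcomp Require Import all_boot all_order all_algebra.
From mathcomp Require Import all_classical all_reals all_analysis.
Set Implicit Arguments. Unset Strict Implicit. Unset Printing Implicit Defensive.
Import Order.TTheory GRing.Theory Num.Theory.
Local Open Scope ring_scope.

(* B_k = [[0,1,k-1],[1,0,0],[0,1,k]]; vectors are row vectors, acting by
   right multiplication. *)
Definition Bmx {R : realType} (k : nat) : 'M[R]_3 :=
  \matrix_(i < 3, j < 3)
    nth 0 (nth [::] [:: [:: 0; 1; k%:R - 1]; [:: 1; 0; 0]; [:: 0; 1; k%:R]] i) j.

Fixpoint Mprod {R : realType} (k : nat -> nat) (n : nat) : 'M[R]_3 :=
  match n with
  | 0 => 1%:M
  | n'.+1 => Bmx (k n'.+1) *m Mprod k n'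
  end.

Definition Qplus {R : realType} (x : 'rV[R]_3) : Prop := forall j, 0 <= x 0 j.

Definition in_cone {R : realType} (M : 'M[R]_3) (x : 'rV[R]_3) : Prop :=
  exists y, Qplus y /\ x = y *m M.

Definition norm1 {R : realType} (x : 'rV[R]_3) : R := \sum_(j < 3) `|x 0 j|.

(* Main.v *)
Require Import Defs.
From HB Require Import structures.
From mathcomp Require Import all_boot all_order all_algebra.
From mathcomp Require Import all_classical all_reals all_analysis.
Import Order.TTheory GRing.Theory Num.Theory.
Import numFieldNormedType.Exports.
Local Open Scope classical_set_scope.
Local Open Scope ring_scope.
From mathcomp Require Import ring lra zify.

Section Work.
Variable R : realType.
Variable k : nat -> nat.
Hypothesis hk : forall i, (1 <= i)%N -> (1 <= k i)%N.
Hypothesis heven : forall N : nat, exists i : nat, (N <= i)%N /\ (1 < k (2 * i))%N.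
Hypothesis hodd : forall N : nat, exists i : nat, (N <= i)%N /\ (1 <= i)%N /\ (1 < k (2 * i - 1))%N.

Definition i0 : 'I_3 := @Ordinal 3 0 isT.
Definition i1 : 'I_3 := @Ordinal 3 1 isT.
Definition i2 : 'I_3 := @Ordinal 3 2 isT.

Lemma ord3P (j : 'I_3) : j = i0 \/ j = i1 \/ j = i2.
Proof.
case: j => [[|[|[|m]]] Hm].
- by left; apply/val_inj.
- by right; left; apply/val_inj.
- by right; right; apply/val_inj.
- by [].
Qed.

Lemma sum3 (F : 'I_3 -> R) : \sum_(j < 3) F j = F i0 + F i1 + F i2.
Proof.
rewrite !big_ord_recr big_ord0 /= add0r.
congr (F _ + F _ + F _); by apply/val_inj.
Qed.

Lemma ord1_0 (i : 'I_1) : i = 0.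
Proof. by apply/val_inj; case: i => [[|]]. Qed.

Definition M n : 'M[R]_3 := Mprod k n.
Definition kk n : R := (k n)%:R.

Lemma M_rec0 n j : M n.+1 i0 j = M n i1 j + (kk n.+1 - 1) * M n i2 j.
Proof.
rewrite /M /= mxE sum3 /Bmx !mxE /=. rewrite /kk. ring.
Qed.
Lemma M_rec1 n j : M n.+1 i1 j = M n i0 j.
Proof.
rewrite /M /= mxE sum3 /Bmx !mxE /=. ring.
Qed.
Lemma M_rec2 n j : M n.+1 i2 j = M n i1 j + kk n.+1 * M n i2 j.
Proof.
rewrite /M /= mxE sum3 /Bmx !mxE /=. rewrite /kk. ring.
Qed.


Definition sv (v : 'rV[R]_3) : R := \sum_j v 0 j.
Definition dist (X Y : 'rV[R]_3) : R := \sum_j `|X 0 j - Y 0 j|.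
Definition pn (v : 'rV[R]_3) : 'rV[R]_3 := (sv v)^-1 *: v.
Definition P n i : 'rV[R]_3 := pn (row i (M n)).
Definition srow n i : R := \sum_j M n i j.
Definition incone n (v : 'rV[R]_3) :=
  exists y : 'I_3 -> R, (forall i, 0 <= y i) /\ forall j, v 0 j = \sum_i y i * M n i j.
Definition inhull n (X : 'rV[R]_3) :=
  exists x : 'I_3 -> R, [/\ (forall i, 0 <= x i), \sum_i x i = 1 &
     forall j, X 0 j = \sum_i x i * P n i 0 j].
Definition inhullc n (X : 'rV[R]_3) :=
  exists x : 'I_3 -> R, [/\ (forall i, 0 <= x i), \sum_i x i = 1, 1/4 <= x i2 &
     forall j, X 0 j = \sum_i x i * P n i 0 j].
Definition D n : R := \big[Num.max/0]_i \big[Num.max/0]_l dist (P n i) (P n l).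

Lemma conv_bound (W : 'I_3 -> 'I_3 -> R) (x : 'I_3 -> R) (B : R) :
  (forall i, 0 <= x i) -> \sum_i x i = 1 -> (forall i, \sum_j `|W i j| <= B) ->
  \sum_j `|\sum_i x i * W i j| <= B.
Proof.
move=> hx hs hW.
apply: le_trans (_ : \sum_j \sum_i x i * `|W i j| <= _).
  apply: ler_sum => j _; apply: le_trans (ler_norm_sum _ _ _) _.
  apply: ler_sum => i _; by rewrite normrM ger0_norm.
rewrite exchange_big /=.
apply: le_trans (_ : \sum_i x i * B <= _).
  apply: ler_sum => i _; rewrite -mulr_sumr; apply: ler_wpM2l => //.
by rewrite -mulr_suml hs mul1r.
Qed.

Lemma conv_dist (V : 'I_3 -> 'I_3 -> R) (x y : 'I_3 -> R) (B : R) :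
  (forall i, 0 <= x i) -> \sum_i x i = 1 ->
  (forall i, 0 <= y i) -> \sum_i y i = 1 ->
  (forall i l, \sum_j `|V i j - V l j| <= B) ->
  \sum_j `|\sum_i x i * V i j - \sum_i y i * V i j| <= B.
Proof.
move=> hx sx hy sy hV.
have step1 : forall l, \sum_j `|\sum_i x i * V i j - V l j| <= B.
  move=> l.
  have -> : \sum_j `|\sum_i x i * V i j - V l j| =
            \sum_j `|\sum_i x i * (V i j - V l j)|.
    apply: eq_bigr => j _; congr `|_|.
    rewrite [RHS](eq_bigr (fun i => x i * V i j - x i * V l j)); last by move=> i _; rewrite mulrBr.
    by rewrite sumrB -mulr_suml sx mul1r.
  exact: conv_bound.
have -> : \sum_j `|\sum_i x i * V i j - \sum_i y i * V i j| =
          \sum_j `|\sum_l y l * (V l j - \sum_i x i * V i j)|.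
  apply: eq_bigr => j _; rewrite -normrN; congr `|_|.
  rewrite [RHS](eq_bigr (fun l => y l * V l j - y l * \sum_i x i * V i j)); last by move=> i _; rewrite mulrBr.
  by rewrite sumrB -mulr_suml sy mul1r opprB.
apply: conv_bound => // l.
rewrite (eq_bigr (fun j => `|\sum_i x i * V i j - V l j|)); first exact: step1.
by move=> j _; rewrite distrC.
Qed.


Lemma dP_le_D n i l : dist (P n i) (P n l) <= D n.
Proof.
apply: (le_trans _ (le_bigmax 0 (fun i => \big[Num.max/0]_l dist (P n i) (P n l)) i)).
exact: (le_bigmax 0 (fun l => dist (P n i) (P n l)) l).
Qed.

Lemma D_ge0 n : 0 <= D n.
Proof.
apply: le_trans (dP_le_D n i0 i0).
by rewrite /dist sumr_ge0 // => j _.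
Qed.

Lemma D_le n B : 0 <= B -> (forall i l, dist (P n i) (P n l) <= B) -> D n <= B.
Proof.
move=> hB h; apply: bigmax_le => // i _; apply: bigmax_le => // l _; exact: h.
Qed.

Lemma hull_dist n X Y : inhull n X -> inhull n Y -> dist X Y <= D n.
Proof.
move=> [x [hx sx EX]] [y [hy sy EY]]; rewrite /dist.
under eq_bigr => j _ do rewrite EX EY.
apply: (@conv_dist (fun i j => P n i 0 j)) => // i l; exact: dP_le_D.
Qed.

Lemma hullc_dist n X Y : inhullc n X -> inhullc n Y -> dist X Y <= 3/4 * D n.
Proof.
have h02 : (i0 == i2) = false by [].
have h12 : (i1 == i2) = false by [].
have h22 : (i2 == i2) = true by [].
pose sh (x : 'I_3 -> R) := fun i => if i == i2 then 4/3 * (x i - 1/4) else 4/3 * x i.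
have shpos : forall x : 'I_3 -> R, (forall i, 0 <= x i) -> 1/4 <= x i2 ->
   forall i, 0 <= sh x i.
  move=> x hx h2 i; rewrite /sh; case: ifP => [/eqP -> |_].
    apply: mulr_ge0 => //; lra.
  apply: mulr_ge0 => //; lra.
have shsum : forall x : 'I_3 -> R, \sum_i x i = 1 -> \sum_i sh x i = 1.
  move=> x; rewrite !sum3 /sh h02 h12 h22 => hs.
  have -> : x i2 = 1 - x i0 - x i1 by rewrite -hs; ring.
  by field; lra.
have shE : forall (x : 'I_3 -> R) j, \sum_i x i = 1 ->
   \sum_i x i * P n i 0 j = 1/4 * P n i2 0 j + 3/4 * \sum_i sh x i * P n i 0 j.
  move=> x j; rewrite !sum3 /sh h02 h12 h22 => hs.
  by field; lra.
have F : forall a b c : R, a + 3/4*b - (a + 3/4*c) = 3/4 * (b - c) by move=> *; field.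
move=> [x [hx sx x2 EX]] [y [hy sy y2 EY]]; rewrite /dist.
under eq_bigr => j _ do rewrite EX EY (shE x j sx) (shE y j sy) F normrM.
rewrite -mulr_sumr ger0_norm; last by lra.
apply: ler_wpM2l; first by lra.
apply: (@conv_dist (fun i j => P n i 0 j)) => //; try exact: shpos.
  exact: shsum.
  exact: shsum.
move=> i l; exact: dP_le_D.
Qed.


Lemma kk_ge1 n : 1 <= kk n.+1.
Proof. by rewrite /kk ler1n; apply: hk. Qed.

Lemma M0E i j : M 0 i j = (i == j)%:R.
Proof. by rewrite /M /= mxE. Qed.

Lemma M_ge0 n i j : 0 <= M n i j.
Proof.
elim: n i j => [|n IH] i j; first by rewrite M0E ler0n.
have hK := kk_ge1 n.
case: (ord3P i) => [->|[->|->]].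
- rewrite M_rec0; apply: addr_ge0 => //; apply: mulr_ge0 => //; lra.
- by rewrite M_rec1.
- rewrite M_rec2; apply: addr_ge0 => //; apply: mulr_ge0 => //; lra.
Qed.

Lemma srow_rec0 n : srow n.+1 i0 = srow n i1 + (kk n.+1 - 1) * srow n i2.
Proof. rewrite /srow !sum3 !M_rec0; ring. Qed.
Lemma srow_rec1 n : srow n.+1 i1 = srow n i0.
Proof. by rewrite /srow !sum3 !M_rec1. Qed.
Lemma srow_rec2 n : srow n.+1 i2 = srow n i1 + kk n.+1 * srow n i2.
Proof. rewrite /srow !sum3 !M_rec2; ring. Qed.

Lemma srow0 i : srow 0 i = 1.
Proof.
rewrite /srow sum3 !M0E.
by case: (ord3P i) => [->|[->|->]] /=; rewrite ?eqxx /=; ring.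
Qed.

Lemma srow_props n : [/\ 1 <= srow n i0, 1 <= srow n i1, 1 <= srow n i2,
   srow n i0 <= srow n i2 & srow n i1 <= srow n i2].
Proof.
elim: n => [|n [ha hb hc hac hbc]]; first by rewrite !srow0 lexx.
rewrite srow_rec0 srow_rec1 srow_rec2.
have hK := kk_ge1 n.
have hKc : 0 <= (kk n.+1 - 1) * srow n i2 by apply: mulr_ge0; lra.
split; nra.
Qed.

Lemma srow_gt0 n i : 0 < srow n i.
Proof.
have [ha hb hc _ _] := srow_props n.
case: (ord3P i) => [->|[->|->]]; lra.
Qed.

Lemma P_E n i j : P n i 0 j = (srow n i)^-1 * M n i j.
Proof.
rewrite /P /pn /sv !mxE; congr (_^-1 * _).
by apply: eq_bigr => l _; rewrite mxE.
Qed.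

Lemma incone_step n v : incone n.+1 v -> incone n v.
Proof.
move=> [y [hy Ev]].
have hK := kk_ge1 n.
pose z := fun i : 'I_3 => if i == i0 then y i1 else if i == i1 then y i0 + y i2
   else (kk n.+1 - 1) * y i0 + kk n.+1 * y i2.
exists z; split.
  move=> i; rewrite /z; case: (ord3P i) => [->|[->|->]] /=.
  - exact: hy.
  - by apply: addr_ge0.
  - apply: addr_ge0; apply: mulr_ge0 => //; lra.
move=> j; rewrite Ev !sum3 M_rec0 M_rec1 M_rec2 /z /=; ring.
Qed.

Lemma incone_le n m v : (n <= m)%N -> incone m v -> incone n v.
Proof.
elim: m => [|m IH]; first by rewrite leqn0 => /eqP ->.
rewrite leq_eqVlt => /orP [/eqP -> //| hlt] hv.
by apply: IH => //; apply: incone_step.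
Qed.

Lemma row_incone m i : incone m (row i (M m)).
Proof.
exists (fun l => (l == i)%:R); split; first by move=> l; rewrite ler0n.
move=> j; rewrite mxE sum3.
by case: (ord3P i) => [->|[->|->]] /=; rewrite ?eqxx /=; ring.
Qed.

Lemma sv_incone n (v : 'rV[R]_3) (y : 'I_3 -> R) : (forall j, v 0 j = \sum_i y i * M n i j) ->
  sv v = \sum_i y i * srow n i.
Proof.
move=> Ev; rewrite /sv sum3 !Ev /srow !sum3; ring.
Qed.

Lemma incone_hull_gen n (v : 'rV[R]_3) (y : 'I_3 -> R) : (forall i, 0 <= y i) ->
  (forall j, v 0 j = \sum_i y i * M n i j) -> 0 < sv v ->
  exists x : 'I_3 -> R, [/\ (forall i, 0 <= x i), \sum_i x i = 1,
     x i2 = y i2 * srow n i2 / sv v &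
     forall j, pn v 0 j = \sum_i x i * P n i 0 j].
Proof.
move=> hy Ev hs.
have S := @sv_incone n v y Ev.
exists (fun i => y i * srow n i / sv v); split => //.
- move=> i; apply: divr_ge0; last exact: ltW.
  apply: mulr_ge0 => //; exact: ltW (srow_gt0 n i).
- rewrite -mulr_suml -S mulfV //; exact: lt0r_neq0.
- move=> j; rewrite /pn mxE Ev !sum3 !P_E.
  have h0 := srow_gt0 n i0; have h1 := srow_gt0 n i1; have h2 := srow_gt0 n i2.
  by field; rewrite !gt_eqF.
Qed.

Lemma incone_hull n v : incone n v -> 0 < sv v -> inhull n (pn v).
Proof.
move=> [y [hy Ev]] hs.
have [x [hx sx _ E]] := @incone_hull_gen n v y hy Ev hs.
by exists x; split.
Qed.


Lemma sv_row m i : sv (row i (M m)) = srow m i.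
Proof. by rewrite /sv /srow; apply: eq_bigr => j _; rewrite mxE. Qed.

Lemma P_hull n m i : (n <= m)%N -> inhull n (P m i).
Proof.
move=> hnm; rewrite /P; apply: incone_hull.
  exact: (@incone_le n m _ hnm (row_incone m i)).
by rewrite sv_row; apply: srow_gt0.
Qed.

Lemma D_mono n m : (n <= m)%N -> D m <= D n.
Proof.
move=> hnm; apply: D_le; first exact: D_ge0.
move=> i l; apply: hull_dist; exact: P_hull.
Qed.

Lemma quarter (y0 y1 y2 S0 S1 S2 : R) : 0 <= y0 -> 0 <= y1 -> 0 <= y2 ->
  0 <= S0 -> S0 <= S2 -> 0 <= S1 -> S1 <= S2 -> y0 + y1 <= 3 * y2 ->
  0 < y0 * S0 + y1 * S1 + y2 * S2 ->
  1/4 <= y2 * S2 / (y0 * S0 + y1 * S1 + y2 * S2).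
Proof.
move=> h0 h1 h2 hS0 hS02 hS1 hS12 hy hT.
rewrite ler_pdivlMr //.
have a : y0 * S0 <= y0 * S2 by apply: ler_wpM2l.
have b : y1 * S1 <= y1 * S2 by apply: ler_wpM2l.
have c : (y0 + y1) * S2 <= 3 * y2 * S2 by apply: ler_wpM2r => //; lra.
nra.
Qed.

Lemma incone_hullc n (v : 'rV[R]_3) (y : 'I_3 -> R) : (forall i, 0 <= y i) ->
  y i0 + y i1 <= 3 * y i2 ->
  (forall j, v 0 j = \sum_i y i * M n i j) -> 0 < sv v -> inhullc n (pn v).
Proof.
move=> hy hy3 Ev hs.
have [x [hx sx x2 E]] := @incone_hull_gen n v y hy Ev hs.
exists x; split => //.
rewrite x2 (@sv_incone n v y Ev) sum3.
have [ha hb hc hac hbc] := srow_props n.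
apply: quarter => //; try lra.
by rewrite (@sv_incone n v y Ev) sum3 in hs.
Qed.

Lemma run n j : (forall l, (n.+2 <= l <= n.+1 + 2 * j)%N -> k l = 1%N) ->
  forall j', (j' <= j)%N -> forall c,
  [/\ M (n.+1 + 2 * j') i0 c = M n.+1 i0 c,
      M (n.+1 + 2 * j') i1 c = M n.+1 i1 c &
      M (n.+1 + 2 * j') i2 c = M n.+1 i2 c + j'%:R * (M n.+1 i0 c + M n.+1 i1 c)].
Proof.
move=> h1; elim=> [|j' IH] hj c.
  by rewrite muln0 addn0 mul0r addr0.
have [e0 e1 e2] := IH (ltnW hj) c.
have -> : (n.+1 + 2 * j'.+1 = (n.+1 + 2*j').+2)%N by lia.
have k1 : kk (n.+1 + 2 * j').+1 = 1 by rewrite /kk h1 //; lia.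
have k2 : kk (n.+1 + 2 * j').+2 = 1 by rewrite /kk h1 //; lia.
set m := (n.+1 + 2 * j')%N.
split.
- rewrite [LHS]M_rec0 k2 (M_rec1 m) e0; ring.
- rewrite [LHS]M_rec1 (M_rec0 m) k1 e1; ring.
- rewrite [LHS]M_rec2 k2 (M_rec1 m) (M_rec2 m) k1 e0 e1 e2 -natr1; ring.
Qed.

Lemma block n j : 2 <= kk n.+1 -> 2 <= kk (n.+1 + 2 * j).+1 ->
  (forall l, (n.+2 <= l <= n.+1 + 2 * j)%N -> k l = 1%N) ->
  D (n.+1 + 2 * j).+1 <= 3/4 * D n.
Proof.
move=> hk1 hK h1.
set m := (n.+1 + 2 * j)%N.
set K := kk m.+1.
set k1 := kk n.+1.
set J : R := j%:R.
have hJ : 0 <= J by rewrite /J ler0n.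
have hK2 : 2 <= K by exact: hK.
have hk2 : 2 <= k1 by exact: hk1.
have p1 : 0 <= (K-1)*J by apply: mulr_ge0; lra.
have p2 : 0 <= J*(k1-1) by apply: mulr_ge0; lra.
have p3 : 0 <= K*J by apply: mulr_ge0; lra.
have hr := @run n j h1 j (leqnn j).
have R0 : forall c, M m.+1 i0 c = (1 + (K-1)*J) * M n i0 c + (K-1)*(1+J) * M n i1 c
          + (K-1)*(k1 + J*(k1-1)) * M n i2 c.
  move=> c; have [e0 e1 e2] := hr c.
  rewrite M_rec0 -/m -/K e1 e2 M_rec0 M_rec1 M_rec2 -/k1 /J; ring.
have R1 : forall c, M m.+1 i1 c = 0 * M n i0 c + 1 * M n i1 c + (k1 - 1) * M n i2 c.
  move=> c; have [e0 e1 e2] := hr c.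
  rewrite M_rec1 -/m e0 M_rec0 -/k1; ring.
have R2 : forall c, M m.+1 i2 c = (1 + K*J) * M n i0 c + K*(1+J) * M n i1 c
          + K*(k1 + J*(k1-1)) * M n i2 c.
  move=> c; have [e0 e1 e2] := hr c.
  rewrite M_rec2 -/m -/K e1 e2 M_rec0 M_rec1 M_rec2 -/k1 /J; ring.
have hc : forall i, inhullc n (P m.+1 i).
  move=> i; rewrite /P.
  have hs : forall i, 0 < sv (row i (M m.+1)) by move=> i'; rewrite sv_row; apply: srow_gt0.
  case: (ord3P i) => [->|[->|->]].
  - pose y := fun l : 'I_3 => if l == i0 then 1 + (K-1)*J else if l == i1 then (K-1)*(1+J)
       else (K-1)*(k1 + J*(k1-1)).
    apply: (@incone_hullc n _ y) => //.
    + move=> l; rewrite /y; case: (ord3P l) => [->|[->|->]] /=; nra.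
    + rewrite /y /=; nra.
    + move=> c; rewrite mxE R0 sum3 /y /=; ring.
  - pose y := fun l : 'I_3 => if l == i0 then 0 else if l == i1 then 1 else k1 - 1.
    apply: (@incone_hullc n _ y) => //.
    + move=> l; rewrite /y; case: (ord3P l) => [->|[->|->]] /=; nra.
    + rewrite /y /=; nra.
    + move=> c; rewrite mxE R1 sum3 /y /=; ring.
  - pose y := fun l : 'I_3 => if l == i0 then 1 + K*J else if l == i1 then K*(1+J)
       else K*(k1 + J*(k1-1)).
    apply: (@incone_hullc n _ y) => //.
    + move=> l; rewrite /y; case: (ord3P l) => [->|[->|->]] /=; nra.
    + rewrite /y /=; nra.
    + move=> c; rewrite mxE R2 sum3 /y /=; ring.
apply: D_le; first by have := D_ge0 n; lra.
move=> i l; apply: hullc_dist; exact: hc.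
Qed.


Lemma par x : exists t, (x = 2 * t \/ x = 2 * t + 1)%N.
Proof.
elim: x => [|x [t [->|->]]]; first by exists 0%N; left.
- by exists t; right; lia.
- by exists t.+1; left; lia.
Qed.

Lemma cons_good d : forall p q, (q - p <= d)%N -> (1 < k p)%N -> (1 < k q)%N ->
  (exists t, q = p + 2 * t + 1)%N -> (1 <= p)%N ->
  exists p' j, [/\ (p <= p')%N, (1 < k p')%N, (1 < k (p' + 2 * j).+1)%N &
     (forall l, (p' < l <= p' + 2 * j)%N -> k l = 1%N)].
Proof.
elim: d => [|d IH] p q hd hp hq [t ht] h1p; first by lia.
have exq : exists m, (p < m)%N && (1 < k m)%N.
  by exists q; rewrite hq andbT; lia.
case: (ex_minnP exq) => q1 /andP [hpq1 hgq1] hmin.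
have hq1q : (q1 <= q)%N by apply: hmin; rewrite hq andbT; lia.
have notgood : forall l, (p < l < q1)%N -> k l = 1%N.
  move=> l /andP [h1 h2].
  have hkl := hk l (ltn_trans (leq_trans h1p (leqnn p)) h1).
  case: (ltnP 1 (k l)) => hl; last by lia.
  have := hmin l; rewrite hl andbT h1 => /(_ isT); lia.
have [s [hs|hs]] := par (q1 - p).
-
  have [p' [j [h1 h2 h3 h4]]] := IH q1 q ltac:(lia) hgq1 hq ltac:(exists (t - s)%N; lia) ltac:(lia).
  exists p', j; split => //; lia.
- exists p, s; split => //.
  + by have -> : (p + 2 * s).+1 = q1 by lia.
  + move=> l hl; apply: notgood; lia.
Qed.


Lemma blocks_exist N : exists n j, [/\ (N <= n)%N, 2 <= kk n.+1, 2 <= kk (n.+1 + 2*j).+1 &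
   forall l, (n.+2 <= l <= n.+1 + 2*j)%N -> k l = 1%N].
Proof.
have [i [hi hki]] := heven N.+1.
have [i' [hi' [hi'1 hki']]] := hodd (2*i).+1.
have [p' [j [hpp' hkp' hkq h1]]] := @cons_good (2*i' - 1 - 2*i) (2*i) (2*i' - 1)
   (leqnn _) hki hki' ltac:(exists (i' - i - 1)%N; lia) ltac:(lia).
exists p'.-1, j.
have hp : p'.-1.+1 = p' by lia.
rewrite hp; split.
- lia.
- by rewrite /kk ler_nat.
- by rewrite /kk ler_nat.
- move=> l hl; apply: h1; lia.
Qed.

Lemma bern i : 1 + i%:R / 3 <= (4/3 : R) ^+ i.
Proof.
elim: i => [|i IH]; first by rewrite expr0; lra.
rewrite exprS -natr1.
have : 0 <= i%:R :> R by rewrite ler0n.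
nra.
Qed.

Lemma decay i : exists m, D m * (4/3) ^+ i <= D 0.
Proof.
elim: i => [|i [m hm]]; first by exists 0%N; rewrite expr0 mulr1.
have [n [j [hn hk1 hk2 h1]]] := blocks_exist m.
exists (n.+1 + 2 * j).+1.
have hb := @block n j hk1 hk2 h1.
have hmn := @D_mono m n hn.
have hpos : 0 <= (4/3 : R) ^+ i by apply: exprn_ge0; lra.
have h2 : D (n.+1 + 2 * j).+1 * (4/3) <= D m by lra.
rewrite exprS mulrA.
apply: le_trans hm; exact: ler_wpM2r.
Qed.

Lemma final_ineq (e B Dm X i : R) : 0 < e -> 0 <= B -> 0 <= i ->
  3 * B < i * e -> 1 + i / 3 <= X -> Dm * X <= B -> e <= Dm -> False.
Proof.
move=> he hB hi h1 h2 h3 h4.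
have h5 : e * (1 + i / 3) <= Dm * X.
  apply: ler_pM => //; first exact: ltW.
  lra.
rewrite (_ : e * (1 + i / 3) = e + i * e / 3) in h5; last by field.
lra.
Qed.

Lemma Dlim e : 0 < e -> exists m, D m < e.
Proof.
move=> he.
have hB : 0 <= D 0 := D_ge0 0.
have hx : 0 <= 3 * D 0 / e by apply: divr_ge0; [lra | exact: ltW].
have hi := archi_boundP hx.
have [m hm] := decay (Num.Def.archi_bound (3 * D 0 / e)).
exists m.
rewrite ltNge; apply/negP => hme.
rewrite ltr_pdivrMr // in hi.
exact: (@final_ineq _ _ _ _ _ he hB (ler0n _ _) hi (bern _) hm hme).
Qed.


Lemma coord_le_dist (X Y : 'rV[R]_3) j : `|X 0 j - Y 0 j| <= dist X Y.
Proof.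
rewrite /dist sum3.
have h0 := normr_ge0 (X 0 i0 - Y 0 i0).
have h1 := normr_ge0 (X 0 i1 - Y 0 i1).
have h2 := normr_ge0 (X 0 i2 - Y 0 i2).
case: (ord3P j) => [->|[->|->]]; lra.
Qed.

Lemma coord_le_norm (X : 'rV[R]_3) j : `|X 0 j| <= `|X|.
Proof.
have -> : `|X| = mx_norm X by [].
rewrite mx_normrE.
exact: (le_bigmax 0 (fun ij : 'I_1 * 'I_3 => `|X ij.1 ij.2|) (0, j)).
Qed.

Lemma dist_le_norm (X Y : 'rV[R]_3) : dist X Y <= 3 * `|X - Y|.
Proof.
rewrite /dist sum3.
have h : forall j, `|X 0 j - Y 0 j| <= `|X - Y|.
  by move=> j; have := coord_le_norm (X - Y) j; rewrite !mxE.
have := h i0; have := h i1; have := h i2; lra.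
Qed.

Lemma dist_triangle (X Y Z : 'rV[R]_3) : dist X Z <= dist X Y + dist Y Z.
Proof.
rewrite /dist -big_split /=; apply: ler_sum => j _.
exact: ler_distD.
Qed.

Lemma distC (X Y : 'rV[R]_3) : dist X Y = dist Y X.
Proof. by apply: eq_bigr => j _; rewrite distrC. Qed.

Lemma dist0 (X Y : 'rV[R]_3) : (forall e, 0 < e -> dist X Y < e) -> X = Y.
Proof.
move=> h; apply/rowP => j.
case: (eqVneq (X 0 j) (Y 0 j)) => // hne.
have hpos : 0 < `|X 0 j - Y 0 j| by rewrite normr_gt0 subr_eq0.
have := h _ hpos; have := coord_le_dist X Y j; lra.
Qed.

Lemma sv_pn (v : 'rV[R]_3) : sv v != 0 -> sv (pn v) = 1.
Proof.
move=> hv; rewrite /sv /pn.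
under eq_bigr => j _ do rewrite mxE.
by rewrite -mulr_sumr mulVf.
Qed.

Lemma sv_le_dist0 (X : 'rV[R]_3) : sv X <= dist X 0.
Proof.
rewrite /sv /dist; apply: ler_sum => j _; rewrite mxE subr0; exact: ler_norm.
Qed.

Lemma sv_gt0 (x : 'rV[R]_3) : (forall j, 0 <= x 0 j) -> x != 0 -> 0 < sv x.
Proof.
move=> hx hne.
have h0 := hx i0; have h1 := hx i1; have h2 := hx i2.
rewrite lt_neqAle; apply/andP; split; last by rewrite /sv sum3; lra.
apply/negP => /eqP hs; apply: (negP hne); apply/eqP/rowP => j; rewrite mxE.
rewrite /sv sum3 in hs.
case: (ord3P j) => [->|[->|->]]; lra.
Qed.

Lemma incone_ge0 n (v : 'rV[R]_3) : incone n v -> forall j, 0 <= v 0 j.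
Proof.
move=> [y [hy Ev]] j; rewrite Ev; apply: sumr_ge0 => i _.
apply: mulr_ge0 => //; exact: M_ge0.
Qed.

Lemma incone_scale n (v : 'rV[R]_3) c : 0 <= c -> incone n v -> incone n (c *: v).
Proof.
move=> hc [y [hy Ev]]; exists (fun i => c * y i); split.
  by move=> i; apply: mulr_ge0.
move=> j; rewrite mxE Ev mulr_sumr; apply: eq_bigr => i _; ring.
Qed.

Lemma in_coneE n (x : 'rV[R]_3) : in_cone (Mprod k n) x <-> incone n x.
Proof.
split.
  move=> [y [hy ->]]; exists (fun i => y 0 i); split => // j.
  by rewrite mxE.
move=> [y [hy Ev]]; exists (\row_i y i); split.
  by move=> j; rewrite mxE.
apply/rowP => j; rewrite Ev !mxE; apply: eq_bigr => i _; by rewrite !mxE.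
Qed.


Definition Binv (kn : nat) : 'M[R]_3 := \matrix_(i < 3, j < 3)
  nth 0 (nth [::] [:: [:: 0; 1; 0]; [:: kn%:R; 0; 1 - kn%:R]; [:: -1; 0; 1]] i) j.

Lemma B_unit kn : Bmx (R:=R) kn \in unitmx.
Proof.
have h : Bmx (R:=R) kn *m Binv kn = 1%:M.
  apply/matrixP => i j; rewrite !mxE sum3 /Bmx /Binv !mxE.
  by case: (ord3P i) => [->|[->|->]]; case: (ord3P j) => [->|[->|->]] /=; ring.
by case: (mulmx1_unit h).
Qed.

Lemma M_unit n : M n \in unitmx.
Proof.
elim: n => [|n IH]; first by rewrite /M /= unitmx1.
by rewrite /M /= unitmx_mul B_unit.
Qed.

Lemma incone_inv n (w : 'rV[R]_3) :
  incone n w <-> forall j, 0 <= (w *m invmx (M n)) 0 j.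
Proof.
split.
  move=> /(in_coneE n w) [y [hy ->]] j.
  by rewrite /M mulmxK //; apply: M_unit.
move=> h; apply/(in_coneE n w); exists (w *m invmx (M n)); split => //.
by rewrite /M mulmxKV //; apply: M_unit.
Qed.

Lemma lin_bound (A : 'M[R]_3) (X Y : 'rV[R]_3) j :
  `|(X *m A) 0 j - (Y *m A) 0 j| <= dist X Y * \sum_i `|A i j|.
Proof.
rewrite !mxE -sumrB mulr_sumr.
apply: le_trans (ler_norm_sum _ _ _) _; apply: ler_sum => i _.
rewrite -mulrBl normrM; apply: ler_wpM2r => //.
exact: coord_le_dist.
Qed.

Lemma neg_ineq (C c e dl z w : R) : 0 <= C -> 0 < c -> e = c / (C + 1) ->
  0 <= z -> `|z - w| <= dl * C -> 0 <= dl -> dl < e -> w = - c -> False.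
Proof.
move=> hC hc he hz hzw hdl hdle hw.
have h1 : dl * C <= e * C by apply: ler_wpM2r => //; exact: ltW.
have h2 : e * C < c.
  rewrite he mulrAC ltr_pdivrMr; last lra.
  nra.
have h3 := ler_norm (z - w).
lra.
Qed.

Lemma incone_closed n (w : 'rV[R]_3) :
  (forall e, 0 < e -> exists Z, incone n Z /\ dist Z w < e) -> incone n w.
Proof.
move=> h; apply/incone_inv => j.
rewrite leNgt; apply/negP => hneg.
set A := invmx (M n).
set C := \sum_i `|A i j|.
have hC : 0 <= C by apply: sumr_ge0 => i _.
set c := - (w *m A) 0 j.
have hc : 0 < c by rewrite /c oppr_gt0.
have he : 0 < c / (C + 1) by apply: divr_gt0 => //; lra.
have [Z [hZ hd]] := h _ he.
have hz := (proj1 (incone_inv n Z) hZ j).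
have hb := lin_bound A Z w j.
have hdl : 0 <= dist Z w by apply: sumr_ge0 => i _.
apply: (@neg_ineq C c (c / (C + 1)) (dist Z w) ((Z *m A) 0 j) ((w *m A) 0 j)) => //.
by rewrite /c opprK.
Qed.


Lemma norm_le_dist (X Y : 'rV[R]_3) : `|X - Y| <= dist X Y.
Proof.
have -> : `|X - Y| = mx_norm (X - Y) by [].
rewrite mx_normrE; apply: bigmax_le; first by apply: sumr_ge0 => i _.
move=> [a b] _ /=; rewrite (ord1_0 a) !mxE; exact: coord_le_dist.
Qed.

Definition Pc m := P m i2.

Lemma Pc_incone n m : (n <= m)%N -> incone n (Pc m).
Proof.
move=> hnm; rewrite /Pc /P /pn; apply: incone_scale.
  by rewrite sv_row invr_ge0; apply: ltW; apply: srow_gt0.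
exact: (@incone_le n m _ hnm (row_incone m i2)).
Qed.

Lemma Pc_cvg : cvg (Pc @ \oo).
Proof.
apply: cauchy_cvg; apply: cauchy_exP => e he.
have [n hn] := @Dlim e he.
exists (Pc n); exists n => // m /= hm.
rewrite mx_norm_ball /ball_ /=.
apply: le_lt_trans (norm_le_dist _ _) _.
rewrite distC; apply: le_lt_trans hn.
apply: hull_dist; exact: P_hull.
Qed.

Definition dd := lim (Pc @ \oo).

Lemma near_dd e : 0 < e -> exists N, forall m, (N <= m)%N -> dist (Pc m) dd < e.
Proof.
move=> he.
have he3 : 0 < e / 3 by apply: divr_gt0 => //; lra.
have [N _ hN] := proj1 (cvgrPdist_lt _ _) Pc_cvg _ he3.
exists N => m hm.
apply: le_lt_trans (dist_le_norm _ _) _.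
rewrite distrC.
have := hN m hm; lra.
Qed.

Lemma dd_approx n X : inhull n X -> forall e, 0 < e -> dist X dd < D n + e.
Proof.
move=> hX e he.
have [N hN] := @near_dd e he.
set m := maxn N n.
have h1 := hN m (leq_maxl N n).
have h2 : dist X (Pc m) <= D n.
  apply: hull_dist => //; apply: P_hull; exact: leq_maxr.
have := dist_triangle X (Pc m) dd; lra.
Qed.

Lemma dd_incone n : incone n dd.
Proof.
apply: incone_closed => e he.
have [N hN] := @near_dd e he.
exists (Pc (maxn N n)); split.
  apply: Pc_incone; exact: leq_maxr.
apply: hN; exact: leq_maxl.
Qed.

Lemma dd_neq0 : dd != 0.
Proof.
apply/negP => /eqP h0.
have [N hN] := @near_dd 1 ltr01.
have := hN N (leqnn N); rewrite h0.
have := sv_le_dist0 (Pc N).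
rewrite /Pc /P sv_pn; last by rewrite sv_row; apply: lt0r_neq0; apply: srow_gt0.
lra.
Qed.


Lemma part1 : exists d : 'rV[R]_3, d != 0 /\
     forall x : 'rV[R]_3,
       (forall n : nat, (1 <= n)%N -> in_cone (Mprod k n) x) <->
       (exists t : R, 0 <= t /\ x = t *: d).
Proof.
exists dd; split; first exact: dd_neq0.
move=> x; split.
- move=> hx.
  case: (eqVneq x 0) => [-> | hne].
    by exists 0; split => //; rewrite scale0r.
  have hx1 : incone 1 x := proj1 (in_coneE 1 x) (hx 1%N isT).
  have hge := @incone_ge0 1 x hx1.
  have hs := @sv_gt0 x hge hne.
  have hall : forall n, incone n x.
    case=> [|n]; first exact: (@incone_le 0 1 x isT hx1).
    exact: (proj1 (in_coneE _ x) (hx n.+1 isT)).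
  have hpx : pn x = dd.
    apply: dist0 => e he.
    have he2 : 0 < e / 2 by apply: divr_gt0 => //; lra.
    have [n hn] := @Dlim (e / 2) he2.
    have := @dd_approx n (pn x) (@incone_hull n x (hall n) hs) _ he2.
    lra.
  exists (sv x); split; first exact: ltW.
  by rewrite -hpx /pn scalerA mulfV ?scale1r // lt0r_neq0.
- move=> [t [ht ->]] n _; apply/in_coneE; apply: incone_scale => //.
  exact: dd_incone.
Qed.

Lemma part2 : exists u : 'rV[R]_3, forall a : 'rV[R]_3, Qplus a -> a != 0 ->
     (fun n : nat => (norm1 (a *m Mprod k n))^-1 *: (a *m Mprod k n)) @ \oo --> u.
Proof.
exists dd => a ha hne.
have hinc : forall m, incone m (a *m Mprod k m).
  by move=> m; apply/in_coneE; exists a.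
have hnz : forall m, a *m Mprod k m != 0.
  move=> m; apply/negP => /eqP h; apply: (negP hne); apply/eqP.
  by rewrite -(mulmxK (M_unit m) a) /M h mul0mx.
have hs : forall m, 0 < sv (a *m Mprod k m).
  move=> m; exact: (@sv_gt0 _ (@incone_ge0 m _ (hinc m)) (hnz m)).
have hn1 : forall m, norm1 (a *m Mprod k m) = sv (a *m Mprod k m).
  move=> m; rewrite /norm1 /sv; apply: eq_bigr => j _; rewrite ger0_norm //.
  exact: (@incone_ge0 m _ (hinc m) j).
apply/cvgrPdist_lt => e he.
have he2 : 0 < e / 2 by apply: divr_gt0 => //; lra.
have [n hn] := @Dlim (e / 2) he2.
exists n => // m /= hm.
rewrite hn1.
apply: le_lt_trans (norm_le_dist _ _) _.
rewrite distC.
have := @dd_approx n _ (@incone_hull n _ (@incone_le n m _ hm (hinc m)) (hs m)) _ he2.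
rewrite /pn; lra.
Qed.

End Work.

Theorem lemma3p3 (R : realType) (k : nat -> nat)
  (hk : forall i, (1 <= i)%N -> (1 <= k i)%N)
  (heven : forall N : nat, exists i : nat, (N <= i)%N /\ (1 < k (2 * i))%N)
  (hodd : forall N : nat, exists i : nat, (N <= i)%N /\ (1 <= i)%N /\ (1 < k (2 * i - 1))%N) :
  (* the intersection of the cones Q^+ B_{k_n}...B_{k_1}, n >= 1, is a single half-line *)
  (exists d : 'rV[R]_3, d != 0 /\
     forall x : 'rV[R]_3,
       (forall n : nat, (1 <= n)%N -> in_cone (Mprod k n) x) <->
       (exists t : R, 0 <= t /\ x = t *: d))
  /\
  (* equivalently: the normalized vectors a B_{k_n}...B_{k_1} converge to a limit
     independent of the nonzero a in Q^+ *)
  (exists u : 'rV[R]_3, forall a : 'rV[R]_3, Qplus a -> a != 0 ->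
     (fun n : nat => (norm1 (a *m Mprod k n))^-1 *: (a *m Mprod k n)) @ \oo --> u).
Proof.
split; [exact: part1 | exact: part2].
Qed.
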